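(* Let $\mathcal{X}=\mathcal{Y}=\{0,1\}$ and let $d:\mathcal{X}\times\mathcal{Y}\to\mathbb{R}_{\mathrm{c}}$ be the single-letter distortion measure given by the matrix $d=\begin{bmatrix}0 & d_{0,1}\\ d_{1,0} & 0\end{bmatrix}$ with $d_{0,1}>0$ and $d_{1,0}>0$ computable. Then there exist a computable sequence of input distributions $(P_{X,n})_{n\in\mathbb{N}}$ in $\mathcal{P}_{\mathrm{c}}(\mathcal{X})$ and a computable maximal distortion level $D_{\max}\in\mathbb{R}_{\mathrm{c}}$ such that no function $F_{\mathrm{opt}}$ computing a sequence of optimal transition probability matrices $P^{*}_{Y|X,n}\in\mathcal{P}_{\mathrm{opt}}(d,D_{\max},P_{X,n})$ is Banach–Mazur computable.
   Context: A real number is computable if it is the effective limit of a computable sequence of rationals (with a recursive modulus of convergence); $\mathbb{R}_{\mathrm{c}}$ denotes the computable reals, a sequence of reals (or vectors/matrices) is computable if this can be done uniformly in the index, and $\mathcal{P}_{\mathrm{c}}(\mathcal{X})$ denotes the probability distributions on $\mathcal{X}$ with computable entries. For a source distribution $P_X$, distortion measure $d$ and level $D$, the rate distortion function is $R(D)=\inf\{I(X;Y): P_{Y|X},\ \sum_{x,y}P_X(x)P_{Y|X}(y|x)d(x,y)\leq D\}$ over all test channels $P_{Y|X}$, and $\mathcal{P}_{\mathrm{opt}}(d,D,P_X)$ is the set of test channels attaining the minimum. The maximal distortion is $D_{\max}=\min_{y}\sum_x P_X(x)d(x,y)$. A function $F_{\mathrm{opt}}$ mapping inputs (source distribution, distortion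 level) to an optimal test channel is Banach–Mazur computable if it maps every computable sequence of inputs to a computable sequence of outputs. *)

(* Defs.v *)
From Stdlib Require Import Reals List Arith.
Import ListNotations.
Open Scope R_scope.

Inductive code : Type :=
| cZero : code
| cSucc : code
| cProj : nat -> code
| cComp : code -> list code -> code
| cPrec : code -> code -> code
| cMin  : code -> code.

Inductive eval : code -> list nat -> nat -> Prop :=
| eZero v : eval cZero v 0
| eSucc x v : eval cSucc (x :: v) (S x)
| eProj i v : (i < length v)%nat -> eval (cProj i) v (nth i v 0%nat)
| eComp f gs v ys y : evals gs v ys -> eval f ys y -> eval (cComp f gs) v y
| ePrec0 f g v y : eval f v y -> eval (cPrec f g) (0%nat :: v) y
| ePrecS f g n v r y :
    eval (cPrec f g) (n :: v) r -> eval g (n :: r :: v) y ->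
    eval (cPrec f g) (S n :: v) y
| eMin f v n :
    eval f (n :: v) 0%nat ->
    (forall m, (m < n)%nat -> exists k, eval f (m :: v) (S k)) ->
    eval (cMin f) v n
with evals : list code -> list nat -> list nat -> Prop :=
| esNil v : evals [] v []
| esCons g gs v y ys : eval g v y -> evals gs v ys -> evals (g :: gs) v (y :: ys).

Definition recursive1 (f : nat -> nat) : Prop :=
  exists c : code, forall n, eval c [n] (f n).
Definition recursive2 (f : nat -> nat -> nat) : Prop :=
  exists c : code, forall n k, eval c [n; k] (f n k).

Definition qval (a b c : nat) : R := (INR a - INR b) / INR (S c).

Definition computable_real (x : R) : Prop :=
  exists a b c e : nat -> nat,
    recursive1 a /\ recursive1 b /\ recursive1 c /\ recursive1 e /\
    forall N k, (e N <= k)%nat -> Rabs (qval (a k) (b k) (c k) - x) <= / 2 ^ N.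

Definition computable_seq (x : nat -> R) : Prop :=
  exists a b c e : nat -> nat -> nat,
    recursive2 a /\ recursive2 b /\ recursive2 c /\ recursive2 e /\
    forall n N k, (e n N <= k)%nat ->
      Rabs (qval (a n k) (b n k) (c n k) - x n) <= / 2 ^ N.

(* ---------- rate distortion on X = Y = {0,1} (false = 0, true = 1) ---------- *)
Definition sum2 (f : bool -> R) : R := f false + f true.

Definition is_dist (P : bool -> R) : Prop :=
  (forall x, 0 <= P x) /\ sum2 P = 1.

(* test channel W x y = P_{Y|X}(y|x) *)
Definition is_channel (W : bool -> bool -> R) : Prop :=
  forall x, is_dist (W x).

Definition out_dist (P : bool -> R) (W : bool -> bool -> R) (y : bool) : R :=
  sum2 (fun x => P x * W x y).

Definition mutual_info (P : bool -> R) (W : bool -> bool -> R) : R :=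
  sum2 (fun x => sum2 (fun y =>
    let j := P x * W x y in
    if Req_EM_T j 0 then 0
    else j * ln (j / (P x * out_dist P W y)) / ln 2)).

Definition exp_distortion (d : bool -> bool -> R) (P : bool -> R)
  (W : bool -> bool -> R) : R :=
  sum2 (fun x => sum2 (fun y => P x * W x y * d x y)).

Definition admissible (d : bool -> bool -> R) (D : R) (P : bool -> R)
  (W : bool -> bool -> R) : Prop :=
  is_channel W /\ exp_distortion d P W <= D.

Definition optimal_channel (d : bool -> bool -> R) (D : R) (P : bool -> R)
  (W : bool -> bool -> R) : Prop :=
  admissible d D P W /\
  forall W', admissible d D P W' -> mutual_info P W <= mutual_info P W'.

Definition Dmax (d : bool -> bool -> R) (P : bool -> R) : R :=
  Rmin (sum2 (fun x => P x * d x false)) (sum2 (fun x => P x * d x true)).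

Definition dmat (d01 d10 : R) (x y : bool) : R :=
  match x, y with
  | false, true => d01
  | true, false => d10
  | _, _ => 0
  end.

Definition BM_computable
  (F : (bool -> R) -> R -> (bool -> bool -> R)) : Prop :=
  forall (P : nat -> bool -> R) (D : nat -> R),
    (forall n, is_dist (P n)) -> (forall n, 0 <= D n) ->
    (forall x, computable_seq (fun n => P n x)) -> computable_seq D ->
    forall x y, computable_seq (fun n => F (P n) (D n) x y).

(* Main.v *)
Require Import Defs.
From Stdlib Require Import Reals.
From Stdlib Require Import Lra List Arith Lia Classical ClassicalDescription ClassicalEpsilon.
Import ListNotations.
Open Scope nat_scope.

Fixpoint tri (n : nat) : nat := match n with 0 => 0 | S m => tri m + S m end.

Inductive ex : Type :=
| V (i : nat) | Kn (n : nat) | Sx (e : ex) | Pd (e : ex)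
| Ad (e1 e2 : ex) | Sb (e1 e2 : ex) | Ml (e1 e2 : ex)
| Tr (e : ex) | Wm (e : ex)
| It (f n x : ex)
| Ext (c : code) (g : nat -> nat -> nat) (e1 e2 : ex).

Fixpoint wfun (z : nat) : nat :=
  match z with 0 => 0 | S z' => let w := wfun z' in if S z' <? tri (S w) then w else S w end.

Fixpoint den (e : ex) (v : list nat) : nat :=
  match e with
  | V i => nth i v 0
  | Kn n => n
  | Sx e => S (den e v)
  | Pd e => pred (den e v)
  | Ad a b => den a v + den b v
  | Sb a b => den a v - den b v
  | Ml a b => den a v * den b v
  | Tr a => tri (den a v)
  | Wm a => wfun (den a v)
  | It f n x => Nat.iter (den n v) (fun r => den f [r]) (den x v)
  | Ext c g a b => g (den a v) (den b v)
  end.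

Fixpoint ok (e : ex) (n : nat) : Prop :=
  match e with
  | V i => i < n
  | Kn _ => True
  | Sx e | Pd e | Tr e | Wm e => ok e n
  | Ad a b | Sb a b | Ml a b => ok a n /\ ok b n
  | It f m x => ok f 1 /\ ok m n /\ ok x n
  | Ext c g a b => (forall x y, eval c [x; y] (g x y)) /\ ok a n /\ ok b n
  end.

Fixpoint kc (n : nat) : code := match n with 0 => cZero | S m => cComp cSucc [kc m] end.
Definition predc := cPrec cZero (cProj 0).
Definition addc := cPrec (cProj 0) (cComp cSucc [cProj 1]).
Definition subc := cComp (cPrec (cProj 0) (cComp predc [cProj 1])) [cProj 1; cProj 0].
Definition mulc := cPrec cZero (cComp addc [cProj 1; cProj 2]).
Definition tric := cPrec cZero (cComp addc [cProj 1; cComp cSucc [cProj 0]]).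
Definition iterc (f : code) := cPrec (cProj 0) (cComp f [cProj 1]).

Lemma ev1 f g v y z : eval g v y -> eval f [y] z -> eval (cComp f [g]) v z.
Proof. intros. econstructor. constructor. eauto. constructor. eauto. Qed.
Lemma ev2 f g1 g2 v y1 y2 z : eval g1 v y1 -> eval g2 v y2 -> eval f [y1; y2] z ->
  eval (cComp f [g1; g2]) v z.
Proof. intros. econstructor. constructor. eauto. constructor. eauto. constructor. eauto. Qed.
Lemma evP i v : i < length v -> eval (cProj i) v (nth i v 0).
Proof. intros; constructor; auto. Qed.

Lemma kc_ok n v : eval (kc n) v n.
Proof. induction n; simpl. constructor. eapply ev1. eauto. constructor. Qed.

Lemma predc_ok a w : eval predc (a :: w) (pred a).
Proof. induction a. constructor. constructor. econstructor. eauto.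
  apply (evP 0 (a :: _ :: w)). simpl; lia. Qed.

Lemma addc_ok a b w : eval addc (a :: b :: w) (a + b).
Proof. induction a. constructor. apply (evP 0 (b::w)). simpl; lia.
  econstructor. eauto. eapply ev1. apply (evP 1 (a :: (a+b) :: b :: w)). simpl; lia. constructor. Qed.

Lemma subc_ok a b w : eval subc (a :: b :: w) (a - b).
Proof. eapply ev2. apply (evP 1 (a::b::w)); simpl; lia. apply (evP 0 (a::b::w)); simpl; lia.
  simpl. clear w. induction b. rewrite Nat.sub_0_r. constructor. apply (evP 0 [a]); simpl; lia.
  econstructor. eauto. eapply ev1. apply (evP 1 (b :: (a-b) :: [a])); simpl; lia.
  replace (a - S b) with (pred (a - b)) by lia. apply predc_ok. Qed.

Lemma mulc_ok a b w : eval mulc (a :: b :: w) (a * b).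
Proof. induction a. constructor. constructor.
  econstructor. eauto. eapply ev2. apply (evP 1 (a :: (a*b) :: b :: w)); simpl; lia.
  apply (evP 2 (a :: (a*b) :: b :: w)); simpl; lia. simpl.
  replace (b + a * b) with (a*b + b) by lia. apply addc_ok. Qed.

Lemma tric_ok a w : eval tric (a :: w) (tri a).
Proof. induction a. constructor. constructor.
  econstructor. eauto. eapply ev2. apply (evP 1 (a :: tri a :: w)); simpl; lia.
  eapply ev1. apply (evP 0 (a :: tri a :: w)); simpl; lia. constructor. simpl. apply addc_ok. Qed.

Lemma iterc_ok f F (Hf : forall r, eval f [r] (F r)) n x w :
  eval (iterc f) (n :: x :: w) (Nat.iter n F x).
Proof. induction n. constructor. apply (evP 0 (x::w)); simpl; lia.
  econstructor. eauto. eapply ev1. apply (evP 1 (n :: _ :: x :: w)); simpl; lia. apply Hf. Qed.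

Lemma tri_mono a b : a <= b -> tri a <= tri b.
Proof. induction 1; simpl; lia. Qed.

Lemma wfun_spec z : tri (wfun z) <= z < tri (S (wfun z)).
Proof. induction z. simpl; lia. cbn [wfun]. destruct (S z <? tri (S (wfun z))) eqn:E;
  [apply Nat.ltb_lt in E | apply Nat.ltb_ge in E]; cbn [tri] in *; lia. Qed.

Definition wgex := Sb (Sx (V 1)) (Tr (Sx (V 0))).

Fixpoint comp (e : ex) : code :=
  match e with
  | V i => cProj i
  | Kn n => kc n
  | Sx a => cComp cSucc [comp a]
  | Pd a => cComp predc [comp a]
  | Ad a b => cComp addc [comp a; comp b]
  | Sb a b => cComp subc [comp a; comp b]
  | Ml a b => cComp mulc [comp a; comp b]
  | Tr a => cComp tric [comp a]
  | Wm a => cComp (cMin (cComp subc [cComp cSucc [cProj 1]; cComp tric [cComp cSucc [cProj 0]]])) [comp a]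
  | It f n x => cComp (iterc (comp f)) [comp n; comp x]
  | Ext c g a b => cComp c [comp a; comp b]
  end.

Lemma wc_ok z w : eval (cMin (cComp subc [cComp cSucc [cProj 1]; cComp tric [cComp cSucc [cProj 0]]])) (z :: w) (wfun z).
Proof.
  assert (G : forall m, eval (cComp subc [cComp cSucc [cProj 1]; cComp tric [cComp cSucc [cProj 0]]]) (m :: z :: w) (S z - tri (S m))).
  { intro m. eapply ev2. eapply ev1. apply (evP 1 (m::z::w)); simpl; lia. constructor.
    eapply ev1. eapply ev1. apply (evP 0 (m::z::w)); simpl; lia. constructor. apply tric_ok. apply subc_ok. }
  pose proof (wfun_spec z).
  constructor. pose proof (G (wfun z)) as G0. replace (S z - tri (S (wfun z))) with 0 in G0 by lia. exact G0.
  intros m Hm. exists (z - tri (S m)). replace (S (z - tri (S m))) with (S z - tri (S m)).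
  apply G. assert (tri (S m) <= tri (wfun z)) by (apply tri_mono; lia). lia.
Qed.

Lemma comp_ok e : forall v, ok e (length v) -> eval (comp e) v (den e v).
Proof.
  induction e; simpl; intros v H.
  - constructor; auto.
  - apply kc_ok.
  - eapply ev1; eauto. constructor.
  - eapply ev1; eauto. apply predc_ok.
  - destruct H. eapply ev2; eauto. apply addc_ok.
  - destruct H. eapply ev2; eauto. apply subc_ok.
  - destruct H. eapply ev2; eauto. apply mulc_ok.
  - eapply ev1; eauto. apply tric_ok.
  - eapply ev1; eauto. apply wc_ok.
  - destruct H as [H1 [H2 H3]]. eapply ev2; eauto. apply iterc_ok.
    intro r. apply (IHe1 [r]). exact H1.
  - destruct H as [H1 [H2 H3]]. eapply ev2; eauto.
Qed.

Definition pair (a b : nat) : nat := tri (a + b) + b.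
Definition unsnd (z : nat) : nat := z - tri (wfun z).
Definition unfst (z : nat) : nat := wfun z - unsnd z.

Lemma wfun_pair a b : wfun (pair a b) = a + b.
Proof.
  pose proof (wfun_spec (pair a b)). unfold pair in *. set (w := wfun _) in *.
  destruct (Nat.lt_trichotomy w (a+b)) as [L|[E|L]]; auto.
  - assert (tri (S w) <= tri (a+b)) by (apply tri_mono; lia). lia.
  - assert (tri (S (a+b)) <= tri w) by (apply tri_mono; lia). simpl in *. lia.
Qed.
Lemma unsnd_pair a b : unsnd (pair a b) = b.
Proof. unfold unsnd. rewrite wfun_pair. unfold pair. lia. Qed.
Lemma unfst_pair a b : unfst (pair a b) = a.
Proof. unfold unfst. rewrite unsnd_pair, wfun_pair. lia. Qed.

Definition EPr a b := Ad (Tr (Ad a b)) b.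
Definition ESn z := Sb z (Tr (Wm z)).
Definition EFs z := Sb (Wm z) (ESn z).
Lemma den_EPr a b v : den (EPr a b) v = pair (den a v) (den b v).
Proof. reflexivity. Qed.
Lemma den_ESn a v : den (ESn a) v = unsnd (den a v).
Proof. reflexivity. Qed.
Lemma den_EFs a v : den (EFs a) v = unfst (den a v).
Proof. reflexivity. Qed.
Definition EIf a b c := Ad (Ml b (Sb (Kn 1) a)) (Ml c (Sb (Kn 1) (Sb (Kn 1) a))).
Lemma den_EIf a b c v : den (EIf a b c) v = match den a v with 0 => den b v | _ => den c v end.
Proof. simpl. destruct (den a v); simpl; lia. Qed.

Inductive ey : Type :=
| Y (i : nat) | Kc (n : nat) | Su (e : ey) | Pe (e : ey)
| Pl (e1 e2 : ey) | Mi (e1 e2 : ey) | Tm (e1 e2 : ey)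
| Fs (e : ey) | Sn (e : ey) | Pr (e1 e2 : ey) | If (a b c : ey)
| Pw (e : ey)
| Iy (f n x : ey)
| Xt (c : code) (g : nat -> nat -> nat) (e1 e2 : ey).

Fixpoint dn (e : ey) (v : list nat) : nat :=
  match e with
  | Y i => nth i v 0
  | Kc n => n
  | Su e => S (dn e v)
  | Pe e => pred (dn e v)
  | Pl a b => dn a v + dn b v
  | Mi a b => dn a v - dn b v
  | Tm a b => dn a v * dn b v
  | Fs a => unfst (dn a v)
  | Sn a => unsnd (dn a v)
  | Pr a b => pair (dn a v) (dn b v)
  | If a b c => match dn a v with 0 => dn b v | S _ => dn c v end
  | Pw a => 2 ^ (dn a v)
  | Iy f n x => Nat.iter (dn n v) (fun r => dn f [r]) (dn x v)
  | Xt c g a b => g (dn a v) (dn b v)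
  end.

Fixpoint oky (e : ey) (n : nat) : Prop :=
  match e with
  | Y i => i < n
  | Kc _ => True
  | Su e | Pe e | Fs e | Sn e | Pw e => oky e n
  | Pl a b | Mi a b | Tm a b | Pr a b => oky a n /\ oky b n
  | If a b c => oky a n /\ oky b n /\ oky c n
  | Iy f m x => oky f 1 /\ oky m n /\ oky x n
  | Xt c g a b => (forall x y, eval c [x; y] (g x y)) /\ oky a n /\ oky b n
  end.

Definition fstc := comp (EFs (V 0)).
Definition sndc := comp (ESn (V 0)).
Definition pairc := comp (EPr (V 0) (V 1)).
Definition ifc := comp (EIf (V 0) (V 1) (V 2)).
Definition pwc := comp (It (Ad (V 0) (V 0)) (V 0) (Kn 1)).

Fixpoint cy (e : ey) : code :=
  match e with
  | Y i => cProj i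
  | Kc n => kc n
  | Su a => cComp cSucc [cy a]
  | Pe a => cComp predc [cy a]
  | Pl a b => cComp addc [cy a; cy b]
  | Mi a b => cComp subc [cy a; cy b]
  | Tm a b => cComp mulc [cy a; cy b]
  | Fs a => cComp fstc [cy a]
  | Sn a => cComp sndc [cy a]
  | Pr a b => cComp pairc [cy a; cy b]
  | If a b c => cComp ifc [cy a; cy b; cy c]
  | Pw a => cComp pwc [cy a]
  | Iy f n x => cComp (iterc (cy f)) [cy n; cy x]
  | Xt c g a b => cComp c [cy a; cy b]
  end.

Lemma ev3 f g1 g2 g3 v y1 y2 y3 z : eval g1 v y1 -> eval g2 v y2 -> eval g3 v y3 ->
  eval f [y1; y2; y3] z -> eval (cComp f [g1; g2; g3]) v z.
Proof. intros. econstructor. repeat constructor; eauto. eauto. Qed.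

Lemma pow_iter n : Nat.iter n (fun r => r + r) 1 = 2 ^ n.
Proof. induction n; simpl; auto. rewrite IHn. lia. Qed.

Lemma cy_ok e : forall v, oky e (length v) -> eval (cy e) v (dn e v).
Proof.
  induction e; simpl; intros v H.
  - constructor; auto.
  - apply kc_ok.
  - eapply ev1; eauto. constructor.
  - eapply ev1; eauto. apply predc_ok.
  - destruct H. eapply ev2; eauto. apply addc_ok.
  - destruct H. eapply ev2; eauto. apply subc_ok.
  - destruct H. eapply ev2; eauto. apply mulc_ok.
  - eapply ev1; eauto. apply (comp_ok (EFs (V 0)) [dn e v]). simpl; lia.
  - eapply ev1; eauto. apply (comp_ok (ESn (V 0)) [dn e v]). simpl; lia.
  - destruct H. eapply ev2; eauto. apply (comp_ok (EPr (V 0) (V 1)) [dn e1 v; dn e2 v]). simpl; lia.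
  - destruct H as [H1 [H2 H3]]. eapply ev3; eauto.
    pose proof (comp_ok (EIf (V 0) (V 1) (V 2)) [dn e1 v; dn e2 v; dn e3 v]) as G.
    rewrite den_EIf in G. apply G. simpl; lia.
  - eapply ev1; eauto. pose proof (comp_ok (It (Ad (V 0) (V 0)) (V 0) (Kn 1)) [dn e v]) as G.
    simpl in G. rewrite pow_iter in G. apply G. lia.
  - destruct H as [H1 [H2 H3]]. eapply ev2; eauto. apply iterc_ok.
    intro r. apply (IHe1 [r]). exact H1.
  - destruct H as [H1 [H2 H3]]. eapply ev2; eauto.
Qed.

Inductive frame : Type :=
| FComp (f : code) (rest : list code) (v acc : list nat)
| FPrecS (g : code) (n : nat) (v : list nat)
| FMin (f : code) (m : nat) (v : list nat).

Inductive st : Type :=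
| Ev (c : code) (v : list nat) (K : list frame)
| Rt (y : nat) (K : list frame).

Definition step (s : st) : st :=
  match s with
  | Ev cZero v K => Rt 0 K
  | Ev cSucc (x :: _) K => Rt (S x) K
  | Ev cSucc [] K => s
  | Ev (cProj i) v K => if i <? length v then Rt (nth i v 0) K else s
  | Ev (cComp f gs) v K =>
      match rev gs with [] => Ev f [] K | g :: rest => Ev g v (FComp f rest v [] :: K) end
  | Ev (cPrec f g) (0 :: v) K => Ev f v K
  | Ev (cPrec f g) (S n :: v) K => Ev (cPrec f g) (n :: v) (FPrecS g n v :: K)
  | Ev (cPrec f g) [] K => s
  | Ev (cMin f) v K => Ev f (0 :: v) (FMin f 0 v :: K)
  | Rt y [] => s
  | Rt y (FComp f rest v acc :: K) =>
      match rest with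
      | [] => Ev f (y :: acc) K
      | g :: rest' => Ev g v (FComp f rest' v (y :: acc) :: K)
      end
  | Rt r (FPrecS g n v :: K) => Ev g (n :: r :: v) K
  | Rt y (FMin f m v :: K) =>
      match y with
      | 0 => Rt m K
      | S _ => Ev f (S m :: v) (FMin f (S m) v :: K)
      end
  end.

Definition run (n : nat) (s : st) : st := Nat.iter n step s.

Lemma run_add a b s : run (a + b) s = run a (run b s).
Proof. unfold run. apply Nat.iter_add. Qed.

Definition reach (s t : st) : Prop := exists n, run n s = t.

Lemma reach_trans s t u : reach s t -> reach t u -> reach s u.
Proof. intros [a Ha] [b Hb]. exists (b + a). rewrite run_add, Ha; auto. Qed.
Lemma reach_step s t : step s = t -> reach s t.
Proof. intros; exists 1; auto. Qed.
Lemma reach_refl s : reach s s.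
Proof. exists 0; auto. Qed.

Definition Q (v : list nat) (g : code) (y : nat) : Prop := forall K, reach (Ev g v K) (Rt y K).

Lemma comp_proc v f : forall l zs, Forall2 (Q v) l zs ->
  forall g l' acc K, l = g :: l' ->
  reach (Ev g v (FComp f l' v acc :: K)) (Ev f (rev zs ++ acc) K).
Proof.
  intros l zs H. induction H as [|x y l1 l2 Hxy H12 IH]; intros g l0 acc K E. discriminate.
  injection E as E1 E2. subst g l0. eapply reach_trans. apply Hxy.
  destruct l1 as [|g' l''].
  - inversion H12; subst. apply reach_step. reflexivity.
  - eapply reach_trans. apply reach_step. reflexivity.
    eapply reach_trans. apply (IH g' l'' (y :: acc) K eq_refl).
    simpl. rewrite <- app_assoc. apply reach_refl.
Qed.

Lemma Forall2_rev' {A B} (P : A -> B -> Prop) l m : Forall2 P l m -> Forall2 P (rev l) (rev m).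
Proof. induction 1; simpl. constructor. apply Forall2_app; auto. Qed.

Lemma complete : forall c v y, eval c v y -> Q v c y
with completes : forall gs v ys, evals gs v ys -> Forall2 (Q v) gs ys.
Proof.
  - intros c v y H. destruct H; intro K0.
    + apply reach_step; reflexivity.
    + apply reach_step; reflexivity.
    + apply reach_step. simpl. apply Nat.ltb_lt in H. rewrite H. reflexivity.
    + pose proof (Forall2_rev' _ _ _ (completes _ _ _ H)) as HF.
      pose proof (complete _ _ _ H0) as Hf.
      destruct (rev gs) as [|g rest] eqn:E.
      * assert (ys = []) by (apply Forall2_length in HF; rewrite length_rev in HF; destruct ys; simpl in HF; [reflexivity|discriminate]).
        subst. eapply reach_trans. apply reach_step. simpl. rewrite E. reflexivity. apply Hf.
      * eapply reach_trans. apply reach_step. simpl. rewrite E. reflexivity.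
        eapply reach_trans. apply (comp_proc v f _ _ HF g rest [] K0 eq_refl).
        rewrite rev_involutive, app_nil_r. apply Hf.
    + eapply reach_trans. apply reach_step. reflexivity. apply (complete _ _ _ H).
    + eapply reach_trans. apply reach_step. reflexivity.
      eapply reach_trans. apply (complete _ _ _ H).
      eapply reach_trans. apply reach_step. reflexivity. apply (complete _ _ _ H0).
    + assert (Hall : forall m, m < n -> exists k, Q (m :: v) f (S k)).
      { intros m Hm. destruct (H0 m Hm) as [k Hk]. exists k. exact (complete _ _ _ Hk). }
      pose proof (complete _ _ _ H) as Hn.
      assert (G : forall d j, j + d = n -> reach (Ev f (j :: v) (FMin f j v :: K0)) (Rt n K0)).
      { induction d; intros j Hj.
        - replace j with n by lia. eapply reach_trans. apply Hn.
          apply reach_step. reflexivity.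
        - destruct (Hall j ltac:(lia)) as [k Hk]. eapply reach_trans. apply Hk.
          eapply reach_trans. apply reach_step. reflexivity. apply IHd. lia. }
      eapply reach_trans. apply reach_step. reflexivity. apply (G n 0). lia.
  - intros gs v ys H. destruct H. constructor. constructor.
    apply (complete _ _ _ H). apply (completes _ _ _ H0).
Qed.

Fixpoint encL (l : list nat) : nat := match l with [] => 0 | x :: l' => S (pair x (encL l')) end.

Fixpoint enc (c : code) : nat :=
  match c with
  | cZero => pair 0 0
  | cSucc => pair 1 0
  | cProj i => pair 2 i
  | cComp f gs => pair 3 (pair (enc f) (encL (rev ((fix encs l := match l with [] => [] | g :: l' => enc g :: encs l' end) gs))))
  | cPrec f g => pair 4 (pair (enc f) (enc g))
  | cMin f => pair 5 (enc f)
  end.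

Lemma enc_comp f gs : enc (cComp f gs) = pair 3 (pair (enc f) (encL (map enc (rev gs)))).
Proof. simpl. rewrite map_rev. do 4 f_equal. Qed.

Definition encF (fr : frame) : nat :=
  match fr with
  | FComp f rest v acc => pair 0 (pair (enc f) (pair (encL (map enc rest)) (pair (encL v) (encL acc))))
  | FPrecS g n v => pair 1 (pair (enc g) (pair n (encL v)))
  | FMin f m v => pair 2 (pair (enc f) (pair m (encL v)))
  end.

Definition encK (K : list frame) : nat := encL (map encF K).

Definition encS (s : st) : nat :=
  match s with
  | Ev c v K => pair 0 (pair (enc c) (pair (encL v) (encK K)))
  | Rt y K => pair 1 (pair y (encK K))
  end.

Definition hdE (e : ey) := Fs (Pe e).
Definition tlE (e : ey) := Sn (Pe e).
Definition csE (a b : ey) := Su (Pr a b).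

Definition stepE : ey :=
  let z := Y 0 in
  let tag := Fs z in let b := Sn z in
  If tag
   (let c := Fs b in let v := Fs (Sn b) in let K := Sn (Sn b) in
    let ct := Fs c in let cd := Sn c in
    If ct (Pr (Kc 1) (Pr (Kc 0) K))
    (If (Mi ct (Kc 1)) (If v z (Pr (Kc 1) (Pr (Su (hdE v)) K)))
    (If (Mi ct (Kc 2)) (If (Iy (tlE (Y 0)) cd v) z (Pr (Kc 1) (Pr (hdE (Iy (tlE (Y 0)) cd v)) K)))
    (If (Mi ct (Kc 3))
       (let f := Fs cd in let l := Sn cd in
        If l (Pr (Kc 0) (Pr f (Pr (Kc 0) K)))
             (Pr (Kc 0) (Pr (hdE l) (Pr v (csE (Pr (Kc 0) (Pr f (Pr (tlE l) (Pr v (Kc 0))))) K)))))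
    (If (Mi ct (Kc 4))
       (let f := Fs cd in let g := Sn cd in
        If v z (let n := hdE v in let w := tlE v in
          If n (Pr (Kc 0) (Pr f (Pr w K)))
               (Pr (Kc 0) (Pr c (Pr (csE (Pe n) w) (csE (Pr (Kc 1) (Pr g (Pr (Pe n) w))) K))))))
    (Pr (Kc 0) (Pr cd (Pr (csE (Kc 0) v) (csE (Pr (Kc 2) (Pr cd (Pr (Kc 0) v))) K)))))))))
   (let y := Fs b in let K := Sn b in
    If K z
     (let fr := hdE K in let K' := tlE K in let ft := Fs fr in let fd := Sn fr in
      If ft
        (let f := Fs fd in let rest := Fs (Sn fd) in let v := Fs (Sn (Sn fd)) in
         let acc := Sn (Sn (Sn fd)) in
         If rest (Pr (Kc 0) (Pr f (Pr (csE y acc) K')))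
           (Pr (Kc 0) (Pr (hdE rest) (Pr v (csE (Pr (Kc 0) (Pr f (Pr (tlE rest) (Pr v (csE y acc))))) K')))))
      (If (Mi ft (Kc 1))
        (let g := Fs fd in let n := Fs (Sn fd) in let w := Sn (Sn fd) in
         Pr (Kc 0) (Pr g (Pr (csE n (csE y w)) K')))
        (let f := Fs fd in let m := Fs (Sn fd) in let v := Sn (Sn fd) in
         If y (Pr (Kc 1) (Pr m K'))
           (Pr (Kc 0) (Pr f (Pr (csE (Su m) v) (csE (Pr (Kc 2) (Pr f (Pr (Su m) v))) K')))))))).

Lemma stepE_ok : oky stepE 1.
Proof. cbv -[lt]. repeat split; try lia; intros; lia. Qed.

Definition stepN (z : nat) : nat := dn stepE [z].

Lemma iter_tl i v : Nat.iter i (fun r => unsnd (pred r)) (encL v) = encL (skipn i v).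
Proof.
  revert v. induction i; intros v. reflexivity.
  rewrite Nat.iter_succ_r. destruct v; simpl.
  - unfold unsnd. simpl. clear IHi. induction i; simpl; auto. rewrite IHi. reflexivity.
  - rewrite unsnd_pair. apply IHi.
Qed.

Lemma skipn_nil_iff i (v : list nat) : skipn i v = [] <-> length v <= i.
Proof. split. intro H. apply (f_equal (@length nat)) in H. rewrite length_skipn in H. simpl in H; lia.
  intro. apply skipn_all2; auto. Qed.

Lemma hd_skipn i (v : list nat) x l : skipn i v = x :: l -> nth i v 0 = x.
Proof. revert v; induction i; intros v H; destruct v; simpl in *; try discriminate. congruence. eauto. Qed.

Ltac pr := repeat (rewrite ?unfst_pair, ?unsnd_pair; cbn [Nat.pred encL map]).

Lemma stepN_ok s : stepN (encS s) = encS (step s).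
Proof.
  unfold stepN. destruct s as [c v K|y K].
  - destruct c as [| |i|f gs|f g|f]; cbn [encS]; try rewrite enc_comp; cbn [enc];
      unfold stepE, hdE, tlE, csE; cbn [dn nth]; pr; cbn [Nat.sub].
    + reflexivity.
    + destruct v; simpl; pr; reflexivity.
    + rewrite iter_tl. unfold step. destruct (i <? length v) eqn:E.
      * apply Nat.ltb_lt in E. destruct (skipn i v) eqn:E2. apply skipn_nil_iff in E2. lia.
        cbn [encL]. pr. rewrite (hd_skipn _ _ _ _ E2). reflexivity.
      * apply Nat.ltb_ge in E. apply skipn_nil_iff in E. rewrite E. reflexivity.
    + unfold step. destruct (rev gs) as [|g rest]; cbn [map encL]; pr; reflexivity.
    + destruct v as [|n w]; cbn [encL]; pr. reflexivity.
      destruct n; pr; try reflexivity.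
    + reflexivity.
  - destruct K as [|fr K]; cbn [encS encK map encL]; unfold stepE, hdE, tlE, csE; cbn [dn nth]; pr. reflexivity.
    destruct fr as [f rest v acc|g n v|f m v]; cbn [encF]; pr; cbn [Nat.sub].
    + destruct rest; cbn [map encL]; pr; reflexivity.
    + reflexivity.
    + destruct y; reflexivity.
Qed.

Lemma pair_surj z : pair (unfst z) (unsnd z) = z.
Proof. pose proof (wfun_spec z). unfold unfst, unsnd, pair. cbn [tri] in H.
  replace (wfun z - (z - tri (wfun z)) + (z - tri (wfun z))) with (wfun z) by lia. lia. Qed.

Lemma pair_inj a b c d : pair a b = pair c d -> a = c /\ b = d.
Proof. intro H. split. rewrite <- (unfst_pair a b), <- (unfst_pair c d), H; auto.
  rewrite <- (unsnd_pair a b), <- (unsnd_pair c d), H; auto. Qed.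

(* halting test: 0 iff halted state *)
Definition hE (z : ey) : ey := Pl (Pl (Mi (Fs z) (Kc 1)) (Mi (Kc 1) (Fs z))) (Sn (Sn z)).
Definition stepCE : ey := If (hE (Sn (Y 0))) (Y 0) (Pr (Su (Fs (Y 0))) (Iy stepE (Kc 1) (Sn (Y 0)))).
Definition hN (z : nat) : nat := dn (hE (Y 0)) [z].
Definition stepC (p : nat) : nat := dn stepCE [p].

Lemma stepC_eq p : stepC p = match hN (unsnd p) with 0 => p | S _ => pair (S (unfst p)) (stepN (unsnd p)) end.
Proof. reflexivity. Qed.

Lemma hN_0 z : hN z = 0 -> z = pair 1 (pair (unfst (unsnd z)) 0).
Proof. unfold hN, hE; cbn [dn nth]. intro H.
  assert (unfst z = 1) by lia. assert (unsnd (unsnd z) = 0) by lia.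
  rewrite <- (pair_surj z) at 1. rewrite H0. f_equal. rewrite <- (pair_surj (unsnd z)) at 1. rewrite H1. auto. Qed.

Lemma hN_halt y : hN (encS (Rt y [])) = 0.
Proof. unfold hN, hE; cbn [dn nth encS encK map encL]. rewrite unfst_pair, !unsnd_pair. reflexivity. Qed.

Lemma hN_notev c v K : hN (encS (Ev c v K)) <> 0.
Proof. unfold hN, hE; cbn [dn nth encS]. rewrite unfst_pair. simpl. lia. Qed.

Lemma stepN_halted z : hN z = 0 -> stepN z = z.
Proof. intro H. apply hN_0 in H. rewrite H. set (y := unfst _).
  change (pair 1 (pair y 0)) with (encS (Rt y [])). rewrite stepN_ok. reflexivity. Qed.

Definition runN (j z : nat) : nat := Nat.iter j stepN z.
Definition runC (j z : nat) : nat := Nat.iter j stepC (pair 0 z).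

Lemma runN_S j z : runN (S j) z = stepN (runN j z).
Proof. reflexivity. Qed.

Lemma runN_enc j s : runN j (encS s) = encS (run j s).
Proof. induction j. reflexivity. rewrite runN_S, IHj, stepN_ok. reflexivity. Qed.

Lemma halted_stay z i j : i <= j -> hN (runN i z) = 0 -> runN j z = runN i z.
Proof. intros Hij Hh. induction Hij. auto. rewrite runN_S, IHHij. apply stepN_halted; auto. Qed.

Lemma runC_pre z j : (forall i, i < j -> hN (runN i z) <> 0) -> runC j z = pair j (runN j z).
Proof. induction j; intros H. reflexivity.
  unfold runC. rewrite Nat.iter_succ. fold (runC j z). rewrite IHj by (intros; apply H; lia).
  rewrite stepC_eq, unsnd_pair, unfst_pair. destruct (hN (runN j z)) eqn:E.
  exfalso; apply (H j); auto. reflexivity. Qed.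

Lemma runC_post z h : (forall i, i < h -> hN (runN i z) <> 0) -> hN (runN h z) = 0 ->
  forall J, h <= J -> runC J z = pair h (runN h z).
Proof. intros H1 H2. induction 1. apply runC_pre; auto.
  unfold runC. rewrite Nat.iter_succ. fold (runC m z). rewrite IHle, stepC_eq, unsnd_pair, H2. reflexivity. Qed.

Lemma least_halt z : (exists k, hN (runN k z) = 0) ->
  exists h, hN (runN h z) = 0 /\ forall i, i < h -> hN (runN i z) <> 0.
Proof.
  intros [k Hk]. induction k as [k IH] using (well_founded_induction lt_wf).
  destruct (classic (exists i, i < k /\ hN (runN i z) = 0)) as [[i [Hi Hi2]]|N].
  - apply (IH i Hi Hi2).
  - exists k. split; auto. intros i Hi E. apply N. eauto.
Qed.

Open Scope R_scope.

Definition ip (k : nat) : R := / 2 ^ k.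
Lemma ip_pos k : 0 < ip k.
Proof. unfold ip. apply Rinv_0_lt_compat, pow_lt; lra. Qed.
Lemma ip_add a b : ip (a + b) = ip a * ip b.
Proof. unfold ip. rewrite pow_add, Rinv_mult. reflexivity. Qed.
Lemma ip_S k : ip (S k) = ip k / 2.
Proof. unfold ip. simpl. rewrite Rinv_mult. unfold Rdiv. lra. Qed.
Lemma ip_mono a b : (a <= b)%nat -> ip b <= ip a.
Proof. intro H. replace b with (a + (b - a))%nat by lia. rewrite ip_add.
  pose proof (ip_pos a). assert (ip (b - a) <= 1).
  { unfold ip. rewrite <- Rinv_1. apply Rinv_le_contravar. lra. apply pow_R1_Rle. lra. }
  nra. Qed.
Lemma ip_0 : ip 0 = 1.
Proof. unfold ip; simpl; lra. Qed.
Lemma ip_le1 k : ip k <= 1.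
Proof. rewrite <- ip_0. apply ip_mono. lia. Qed.
Lemma ip_2pow k : ip k * 2 ^ k = 1.
Proof. unfold ip. field. apply pow_nonzero. lra. Qed.

Definition FC (x : nat -> R) : Prop :=
  exists a b c : nat -> nat -> nat,
    recursive2 a /\ recursive2 b /\ recursive2 c /\
    forall n k, Rabs (qval (a n k) (b n k) (c n k) - x n) <= ip k.

Lemma rec2_ey e : oky e 2 -> recursive2 (fun n k => dn e [n; k]).
Proof. intro H. exists (cy e). intros n k. apply (cy_ok e [n; k]). exact H. Qed.

Lemma rec2_code f : recursive2 f -> exists c, forall x y, eval c [x; y] (f x y).
Proof. intros [c H]. exists c. exact H. Qed.

Lemma rec1_code f : recursive1 f -> exists c, forall x y, eval c [x; y] (f x).
Proof. intros [c H]. exists (cComp c [cProj 0]). intros x y. eapply ev1.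
  apply (evP 0 [x; y]). simpl; lia. apply H. Qed.

Lemma FC_ext x y : FC x -> (forall n, x n = y n) -> FC y.
Proof. intros [a [b [c [Ha [Hb [Hc H]]]]]] E. exists a, b, c. repeat split; auto.
  intros n k. rewrite <- E. auto. Qed.

Lemma FC_of_cs x : computable_seq x -> FC x.
Proof.
  intros [a [b [c [e [Ha [Hb [Hc [He H]]]]]]]].
  destruct (rec2_code _ Ha) as [ca Ca]. destruct (rec2_code _ Hb) as [cb Cb].
  destruct (rec2_code _ Hc) as [cc Cc]. destruct (rec2_code _ He) as [ce Ce].
  exists (fun n k => dn (Xt ca a (Y 0) (Xt ce e (Y 0) (Y 1))) [n; k]),
         (fun n k => dn (Xt cb b (Y 0) (Xt ce e (Y 0) (Y 1))) [n; k]),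
         (fun n k => dn (Xt cc c (Y 0) (Xt ce e (Y 0) (Y 1))) [n; k]).
  repeat split; try (apply rec2_ey; simpl; repeat split; auto; lia).
  intros n k. simpl. apply H. lia.
Qed.

Lemma cs_of_FC x : FC x -> computable_seq x.
Proof.
  intros [a [b [c [Ha [Hb [Hc H]]]]]].
  exists a, b, c, (fun n k => dn (Y 1) [n; k]). repeat split; auto.
  apply rec2_ey; simpl; lia.
  intros n N k Hk. simpl in Hk. eapply Rle_trans. apply H. apply ip_mono. lia.
Qed.

Lemma FC_const d : computable_real d -> FC (fun _ => d).
Proof.
  intros [a [b [c [e [Ha [Hb [Hc [He H]]]]]]]].
  destruct (rec1_code _ Ha) as [ca Ca]. destruct (rec1_code _ Hb) as [cb Cb].
  destruct (rec1_code _ Hc) as [cc Cc]. destruct (rec1_code _ He) as [ce Ce].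
  exists (fun n k => dn (Xt ca (fun x _ => a x) (Xt ce (fun x _ => e x) (Y 1) (Y 1)) (Y 1)) [n; k]),
         (fun n k => dn (Xt cb (fun x _ => b x) (Xt ce (fun x _ => e x) (Y 1) (Y 1)) (Y 1)) [n; k]),
         (fun n k => dn (Xt cc (fun x _ => c x) (Xt ce (fun x _ => e x) (Y 1) (Y 1)) (Y 1)) [n; k]).
  repeat split; try (apply rec2_ey; simpl; repeat split; auto; lia).
  intros n k. simpl. apply H. lia.
Qed.

Lemma INR_S_pos c : 0 < INR (S c).
Proof. apply lt_0_INR. lia. Qed.

Lemma qval_add a1 b1 c1 a2 b2 c2 :
  qval (a1 * S c2 + a2 * S c1) (b1 * S c2 + b2 * S c1) (c1 * c2 + c1 + c2) =
  qval a1 b1 c1 + qval a2 b2 c2.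
Proof.
  unfold qval. replace (S (c1 * c2 + c1 + c2)) with (S c1 * S c2)%nat by lia.
  rewrite !plus_INR, !mult_INR. pose proof (INR_S_pos c1). pose proof (INR_S_pos c2).
  field. lra.
Qed.

Lemma qval_mul a1 b1 c1 a2 b2 c2 :
  qval (a1 * a2 + b1 * b2) (a1 * b2 + b1 * a2) (c1 * c2 + c1 + c2) =
  qval a1 b1 c1 * qval a2 b2 c2.
Proof.
  unfold qval. replace (S (c1 * c2 + c1 + c2)) with (S c1 * S c2)%nat by lia.
  rewrite !plus_INR, !mult_INR. pose proof (INR_S_pos c1). pose proof (INR_S_pos c2).
  field. lra.
Qed.

Lemma qval_neg a b c : qval b a c = - qval a b c.
Proof. unfold qval. field. pose proof (INR_S_pos c). lra. Qed.

Lemma qval_inv a b c : (b < a)%nat -> qval (S c) 0 (a - b - 1) = / qval a b c.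
Proof.
  intro H. unfold qval. replace (S (a - b - 1)) with (a - b)%nat by lia.
  rewrite minus_INR by lia. simpl (INR 0). pose proof (INR_S_pos c).
  assert (INR b < INR a) by (apply lt_INR; auto). field. lra.
Qed.

Lemma FC_add x y : FC x -> FC y -> FC (fun n => x n + y n).
Proof.
  intros [a1 [b1 [c1 [Ha1 [Hb1 [Hc1 H1]]]]]] [a2 [b2 [c2 [Ha2 [Hb2 [Hc2 H2]]]]]].
  destruct (rec2_code _ Ha1) as [ca1 Ca1]. destruct (rec2_code _ Hb1) as [cb1 Cb1].
  destruct (rec2_code _ Hc1) as [cc1 Cc1]. destruct (rec2_code _ Ha2) as [ca2 Ca2].
  destruct (rec2_code _ Hb2) as [cb2 Cb2]. destruct (rec2_code _ Hc2) as [cc2 Cc2].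
  set (k1 := Su (Y 1)).
  exists (fun n k => dn (Pl (Tm (Xt ca1 a1 (Y 0) k1) (Su (Xt cc2 c2 (Y 0) k1)))
                          (Tm (Xt ca2 a2 (Y 0) k1) (Su (Xt cc1 c1 (Y 0) k1)))) [n; k]),
         (fun n k => dn (Pl (Tm (Xt cb1 b1 (Y 0) k1) (Su (Xt cc2 c2 (Y 0) k1)))
                          (Tm (Xt cb2 b2 (Y 0) k1) (Su (Xt cc1 c1 (Y 0) k1)))) [n; k]),
         (fun n k => dn (Pl (Pl (Tm (Xt cc1 c1 (Y 0) k1) (Xt cc2 c2 (Y 0) k1)) (Xt cc1 c1 (Y 0) k1))
                          (Xt cc2 c2 (Y 0) k1)) [n; k]).
  repeat split; try (apply rec2_ey; simpl; repeat split; auto; lia).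
  intros n k. cbn [dn nth k1]. rewrite qval_add.
  specialize (H1 n (S k)). specialize (H2 n (S k)). rewrite ip_S in *.
  eapply Rle_trans. 2: apply Req_le; apply Rplus_half_diag. unfold Rdiv in *.
  replace (qval (a1 n (S k)) (b1 n (S k)) (c1 n (S k)) + qval (a2 n (S k)) (b2 n (S k)) (c2 n (S k)) - (x n + y n))
    with ((qval (a1 n (S k)) (b1 n (S k)) (c1 n (S k)) - x n) + (qval (a2 n (S k)) (b2 n (S k)) (c2 n (S k)) - y n)) by ring.
  eapply Rle_trans. apply Rabs_triang. lra.
Qed.

Lemma FC_neg x : FC x -> FC (fun n => - x n).
Proof.
  intros [a [b [c [Ha [Hb [Hc H]]]]]]. exists b, a, c. repeat split; auto.
  intros n k. rewrite qval_neg. replace (- qval (a n k) (b n k) (c n k) - - x n)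
    with (- (qval (a n k) (b n k) (c n k) - x n)) by ring. rewrite Rabs_Ropp. auto.
Qed.

Lemma FC_mul x y B : FC x -> FC y -> (forall n, Rabs (x n) <= 2 ^ B) -> (forall n, Rabs (y n) <= 2 ^ B) ->
  FC (fun n => x n * y n).
Proof.
  intros [a1 [b1 [c1 [Ha1 [Hb1 [Hc1 H1]]]]]] [a2 [b2 [c2 [Ha2 [Hb2 [Hc2 H2]]]]]] Bx By.
  destruct (rec2_code _ Ha1) as [ca1 Ca1]. destruct (rec2_code _ Hb1) as [cb1 Cb1].
  destruct (rec2_code _ Hc1) as [cc1 Cc1]. destruct (rec2_code _ Ha2) as [ca2 Ca2].
  destruct (rec2_code _ Hb2) as [cb2 Cb2]. destruct (rec2_code _ Hc2) as [cc2 Cc2].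
  set (k1 := Pl (Y 1) (Kc (B + 2))).
  exists (fun n k => dn (Pl (Tm (Xt ca1 a1 (Y 0) k1) (Xt ca2 a2 (Y 0) k1))
                          (Tm (Xt cb1 b1 (Y 0) k1) (Xt cb2 b2 (Y 0) k1))) [n; k]),
         (fun n k => dn (Pl (Tm (Xt ca1 a1 (Y 0) k1) (Xt cb2 b2 (Y 0) k1))
                          (Tm (Xt cb1 b1 (Y 0) k1) (Xt ca2 a2 (Y 0) k1))) [n; k]),
         (fun n k => dn (Pl (Pl (Tm (Xt cc1 c1 (Y 0) k1) (Xt cc2 c2 (Y 0) k1)) (Xt cc1 c1 (Y 0) k1))
                          (Xt cc2 c2 (Y 0) k1)) [n; k]).
  repeat split; try (apply rec2_ey; simpl; repeat split; auto; lia).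
  intros n k. cbn [dn nth k1]. rewrite qval_mul.
  set (K := (k + (B + 2))%nat).
  set (q1 := qval (a1 n K) (b1 n K) (c1 n K)). set (q2 := qval (a2 n K) (b2 n K) (c2 n K)).
  specialize (H1 n K). specialize (H2 n K). specialize (Bx n). specialize (By n). fold q1 q2 in H1, H2.
  assert (E : ip K * 2 ^ B * 4 = ip k).
  { unfold K. rewrite !ip_add. replace (ip 2) with (/4) by (unfold ip; simpl; lra).
    replace (ip k * (ip B * / 4) * 2 ^ B * 4) with (ip k * (ip B * 2^B)) by field.
    rewrite ip_2pow; ring. }
  replace (q1 * q2 - x n * y n) with ((q1 - x n) * q2 + x n * (q2 - y n)) by ring.
  eapply Rle_trans. apply Rabs_triang. rewrite !Rabs_mult.
  pose proof (ip_pos K). pose proof (ip_le1 K).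
  assert (1 <= 2 ^ B) by (apply pow_R1_Rle; lra).
  assert (Rabs q2 <= 2 ^ B + 1).
  { replace q2 with ((q2 - y n) + y n) by ring. eapply Rle_trans. apply Rabs_triang. lra. }
  assert (Rabs (q1 - x n) * Rabs q2 <= ip K * (2 ^ B + 1)).
  { apply Rmult_le_compat; auto using Rabs_pos. }
  assert (Rabs (x n) * Rabs (q2 - y n) <= 2 ^ B * ip K).
  { apply Rmult_le_compat; auto using Rabs_pos. }
  nra.
Qed.

Lemma FC_inv x M : FC x -> (forall n, ip M <= x n) -> FC (fun n => / x n).
Proof.
  intros [a [b [c [Ha [Hb [Hc H]]]]]] Lx.
  destruct (rec2_code _ Ha) as [ca Ca]. destruct (rec2_code _ Hb) as [cb Cb].
  destruct (rec2_code _ Hc) as [cc Cc].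
  set (k1 := Pl (Y 1) (Kc (M + M + 2))).
  exists (fun n k => dn (Su (Xt cc c (Y 0) k1)) [n; k]), (fun n k => dn (Kc 0) [n; k]),
         (fun n k => dn (Mi (Mi (Xt ca a (Y 0) k1) (Xt cb b (Y 0) k1)) (Kc 1)) [n; k]).
  repeat split; try (apply rec2_ey; simpl; repeat split; auto; lia).
  intros n k. cbn [dn nth k1].
  set (K := (k + (M + M + 2))%nat).
  specialize (H n K). specialize (Lx n).
  assert (EK : ip K = ip k * ip M * ip M / 4).
  { unfold K. rewrite !ip_add. replace (ip 2) with (/4) by (unfold ip; simpl; lra). field. }
  pose proof (ip_pos k). pose proof (ip_pos M). pose proof (ip_le1 k).
  set (q := qval (a n K) (b n K) (c n K)) in *.
  assert (Hq : ip M / 2 <= q).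
  { assert (x n - q <= Rabs (q - x n)) by (rewrite <- Rabs_Ropp; replace (-(q - x n)) with (x n - q) by ring; apply Rle_abs).
    assert (ip k * ip M * ip M / 4 <= ip M / 4).
    { assert (ip M <= 1) by apply ip_le1. assert (ip k * ip M <= 1) by nra. nra. } lra. }
  assert (Hab : (b n K < a n K)%nat).
  { apply INR_lt. pose proof (INR_S_pos (c n K)).
    assert (INR (a n K) - INR (b n K) = q * INR (S (c n K))) by (unfold q, qval; field; lra).
    nra. }
  rewrite qval_inv by auto. fold q.
  assert (0 < q) by lra. assert (0 < x n) by lra.
  replace (/ q - / x n) with ((x n - q) / (q * x n)) by (field; lra).
  unfold Rdiv. rewrite Rabs_mult, Rabs_inv, (Rabs_pos_eq (q * x n)) by nra.
  rewrite <- Rabs_Ropp, Ropp_minus_distr.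
  assert (ip M * ip M / 2 <= q * x n) by nra.
  apply (Rle_trans _ (ip K * / (ip M * ip M / 2))).
  apply Rmult_le_compat; auto using Rabs_pos. left; apply Rinv_0_lt_compat; nra.
  apply Rinv_le_contravar; nra.
  rewrite EK. replace (ip k * ip M * ip M / 4 * / (ip M * ip M / 2)) with (ip k / 2) by (field; lra). lra.
Qed.

Open Scope R_scope.

Lemma ln_le_sub1 t : 0 < t -> ln t <= t - 1.
Proof. intro H. pose proof (exp_ineq1_le (ln t)). rewrite exp_ln in H0; lra. Qed.
Lemma ln_eq_sub1 t : 0 < t -> ln t = t - 1 -> t = 1.
Proof. intros H E. destruct (Req_dec (ln t) 0) as [Z|Z].
  rewrite <- (exp_ln t), Z, exp_0 by auto. reflexivity.
  pose proof (exp_ineq1 _ Z). rewrite exp_ln in H0; lra. Qed.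

Definition T (j m : R) : R := if Req_EM_T j 0 then 0 else j * ln (j / m) / ln 2.

Lemma ln2_pos : 0 < ln 2.
Proof. rewrite <- ln_1. apply ln_increasing; lra. Qed.

Lemma T_ge j m : 0 <= j -> 0 <= m -> (0 < j -> 0 < m) -> (j - m) / ln 2 <= T j m.
Proof.
  intros Hj Hm Hjm. pose proof ln2_pos. unfold T. destruct (Req_EM_T j 0).
  - subst. unfold Rdiv. assert (0 <= m * / ln 2) by (apply Rmult_le_pos; [lra| left; apply Rinv_0_lt_compat; lra]). nra.
  - assert (0 < j) by lra. assert (0 < m) by auto.
    apply Rmult_le_compat_r. left; apply Rinv_0_lt_compat; lra.
    assert (E : ln (j / m) = - ln (m / j)).
    { rewrite <- ln_Rinv by (apply Rdiv_lt_0_compat; lra). f_equal. field. lra. }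
    rewrite E. pose proof (ln_le_sub1 (m / j) ltac:(apply Rdiv_lt_0_compat; lra)).
    assert (HH : j * ln (m / j) <= j * (m / j - 1)) by (apply Rmult_le_compat_l; lra).
    replace (j * (m / j - 1)) with (m - j) in HH by (field; lra). lra.
Qed.

Lemma T_eq j m : 0 <= j -> 0 <= m -> (0 < j -> 0 < m) -> T j m = (j - m) / ln 2 -> j = m.
Proof.
  intros Hj Hm Hjm E. pose proof ln2_pos. unfold T in E. destruct (Req_EM_T j 0).
  - subst. unfold Rdiv in E. assert (0 = - m) by (apply (Rmult_eq_reg_r (/ ln 2)); [lra| apply Rinv_neq_0_compat; lra]). lra.
  - assert (0 < j) by lra. assert (0 < m) by auto.
    assert (E2 : j * ln (j / m) = j - m).
    { apply (Rmult_eq_reg_r (/ ln 2)). exact E. apply Rinv_neq_0_compat; lra. }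
    assert (E3 : ln (j / m) = - ln (m / j)).
    { rewrite <- ln_Rinv by (apply Rdiv_lt_0_compat; lra). f_equal. field. lra. }
    rewrite E3 in E2. assert (HH : ln (m / j) = m / j - 1).
    { apply (Rmult_eq_reg_l j). replace (j * (m / j - 1)) with (m - j) by (field; lra). lra. lra. }
    apply ln_eq_sub1 in HH. 2: apply Rdiv_lt_0_compat; lra.
    apply (Rmult_eq_compat_l j) in HH. replace (j * (m / j)) with m in HH by (field; lra). lra.
Qed.

Lemma T_same j : T j j = 0.
Proof. unfold T. destruct (Req_EM_T j 0). auto. unfold Rdiv. rewrite Rinv_r, ln_1 by auto. ring. Qed.

Lemma mi_T P W : mutual_info P W =
  T (P false * W false false) (P false * out_dist P W false) +
  T (P false * W false true) (P false * out_dist P W true) +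
  (T (P true * W true false) (P true * out_dist P W false) +
  T (P true * W true true) (P true * out_dist P W true)).
Proof. reflexivity. Qed.

Lemma mi_indep P W : is_dist P -> is_channel W -> mutual_info P W <= 0 ->
  forall x y, P x * W x y = P x * out_dist P W y.
Proof.
  intros [HP1 HP2] HW Hmi. unfold sum2 in HP2.
  assert (HWp : forall x y, 0 <= W x y) by (intros; apply (HW x)).
  assert (HWs : forall x, W x false + W x true = 1) by (intro x; apply (HW x)).
  assert (Ho : forall y, 0 <= out_dist P W y).
  { intro y. unfold out_dist, sum2. pose proof (HP1 false). pose proof (HP1 true).
    pose proof (HWp false y). pose proof (HWp true y). nra. }
  assert (Hjm : forall x y, 0 < P x * W x y -> 0 < P x * out_dist P W y).
  { intros x y H. assert (0 < P x) by (destruct (HP1 x); auto; rewrite <- H0 in H; lra).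
    assert (P x * W x y <= out_dist P W y).
    { unfold out_dist, sum2. pose proof (HP1 false). pose proof (HP1 true).
      pose proof (HWp false y). pose proof (HWp true y). destruct x; nra. }
    apply Rmult_lt_0_compat; lra. }
  assert (G : forall x y, (P x * W x y - P x * out_dist P W y) / ln 2 <= T (P x * W x y) (P x * out_dist P W y)).
  { intros. apply T_ge; auto. apply Rmult_le_pos; auto. apply Rmult_le_pos; auto. }
  assert (Sum : (P false * W false false - P false * out_dist P W false) +
                (P false * W false true - P false * out_dist P W true) +
                ((P true * W true false - P true * out_dist P W false) +
                 (P true * W true true - P true * out_dist P W true)) = 0).
  { unfold out_dist, sum2. pose proof (HWs false). pose proof (HWs true).
    replace (P false * W false false - P false * (P false * W false false + P true * W true false) +
      (P false * W false true - P false * (P false * W false true + P true * W true true)) +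
      (P true * W true false - P true * (P false * W false false + P true * W true false) +
      (P true * W true true - P true * (P false * W false true + P true * W true true))))
      with (P false * (W false false + W false true) + P true * (W true false + W true true)
        - (P false + P true) * (P false * (W false false + W false true) + P true * (W true false + W true true))) by ring.
    rewrite H, H0, HP2. ring. }
  rewrite mi_T in Hmi. pose proof ln2_pos.
  assert (Z : forall x y, T (P x * W x y) (P x * out_dist P W y) = (P x * W x y - P x * out_dist P W y) / ln 2).
  { pose proof (G false false). pose proof (G false true). pose proof (G true false). pose proof (G true true).
    assert (Sum' : (P false * W false false - P false * out_dist P W false) / ln 2 +
                (P false * W false true - P false * out_dist P W true) / ln 2 +
                ((P true * W true false - P true * out_dist P W false) / ln 2 +
                 (P true * W true true - P true * out_dist P W true) / ln 2) = 0).
    { unfold Rdiv. rewrite <- !Rmult_plus_distr_r, Sum. ring. }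
    intros [|] [|]; lra. }
  intros x y. apply T_eq; auto. apply Rmult_le_pos; auto. apply Rmult_le_pos; auto.
Qed.

Lemma sum_dmat_false d01 d10 (P : bool -> R) : sum2 (fun x => P x * dmat d01 d10 x false) = P true * d10.
Proof. unfold sum2; simpl; ring. Qed.
Lemma sum_dmat_true d01 d10 (P : bool -> R) : sum2 (fun x => P x * dmat d01 d10 x true) = P false * d01.
Proof. unfold sum2; simpl; ring. Qed.

Lemma dist_dmat d01 d10 P W : exp_distortion (dmat d01 d10) P W =
  P false * W false true * d01 + P true * W true false * d10.
Proof. unfold exp_distortion, sum2; simpl; ring. Qed.

Definition Wc (b : bool) (x y : bool) : R := if Bool.eqb y b then 1 else 0.

Lemma Wc_channel b : is_channel (Wc b).
Proof. intro x. split. intro y. unfold Wc. destruct (Bool.eqb y b); lra.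
  unfold sum2, Wc. destruct b; simpl; lra. Qed.

Lemma Wc_mi P b : is_dist P -> mutual_info P (Wc b) = 0.
Proof. intros [_ HP]. unfold sum2 in HP.
  assert (O : forall y, out_dist P (Wc b) y = Wc b false y).
  { intro y. unfold out_dist, sum2, Wc. destruct (Bool.eqb y b); lra. }
  rewrite mi_T, !O. unfold Wc at 1 3 5 7. simpl. rewrite !T_same. ring. Qed.

Lemma opt_sign d01 d10 P W : 0 < d01 -> 0 < d10 -> is_dist P -> 0 < P false -> 0 < P true ->
  optimal_channel (dmat d01 d10) (Dmax (dmat d01 d10) P) P W ->
  (P false * d01 < P true * d10 -> W false true = 1) /\
  (P true * d10 < P false * d01 -> W false true = 0).
Proof.
  intros H01 H10 HP Pf Pt [[HW HD] Hopt].
  assert (HWp : forall x y, 0 <= W x y) by (intros; apply (HW x)).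
  assert (HWs : forall x, W x false + W x true = 1) by (intro x; apply (HW x)).
  unfold Dmax in *. rewrite sum_dmat_false, sum_dmat_true in *. rewrite dist_dmat in HD.
  assert (Hind : forall b, exp_distortion (dmat d01 d10) P (Wc b) <= Rmin (P true * d10) (P false * d01) ->
     forall x y, W x y = out_dist P W y).
  { intros b Hb. assert (mutual_info P W <= 0).
    { rewrite <- (Wc_mi P b HP). apply Hopt. split. apply Wc_channel.
      exact Hb. }
    intros x y. pose proof (mi_indep P W HP HW H x y).
    apply (Rmult_eq_reg_l (P x)). auto. destruct x; lra. }
  assert (Wtf : forall b, exp_distortion (dmat d01 d10) P (Wc b) <= Rmin (P true * d10) (P false * d01) ->
     W true false = 1 - W false true).
  { intros b Hb. pose proof (Hind b Hb) as E. pose proof (HWs true) as H.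
    rewrite (E true true), <- (E false true) in H. lra. }
  pose proof (HWp false true). assert (W false true <= 1) by (pose proof (HWs false); pose proof (HWp false false); lra).
  split; intro Hlt.
  - rewrite Rmin_right in * by lra.
    rewrite (Wtf true ltac:(rewrite dist_dmat; unfold Wc; simpl; lra)) in HD.
    assert ((1 - W false true) * (P true * d10 - P false * d01) <= 0) by nra.
    destruct (Req_dec (W false true) 1); auto. assert (0 < 1 - W false true) by lra. nra.
  - rewrite Rmin_left in * by lra.
    rewrite (Wtf false ltac:(rewrite dist_dmat; unfold Wc; simpl; lra)) in HD.
    assert (W false true * (P false * d01 - P true * d10) <= 0) by nra.
    destruct (Req_dec (W false true) 0); auto. assert (0 < W false true) by lra. nra.
Qed.

Open Scope R_scope.

Definition initE : ey := Pr (Kc 0) (Pr (Y 0) (Pr (Su (Pr (Y 0) (Kc 0))) (Kc 0))).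
Definition pE : ey := Iy stepCE (Y 1) (Pr (Kc 0) initE).
Definition hhE : ey := hE (Sn pE).
Definition yyE : ey := Fs (Sn (Sn pE)).
Definition AE : ey := If hhE (If yyE (Kc 1) (Kc 0)) (Kc 0).
Definition BE : ey := If hhE (If yyE (Kc 0) (Kc 1)) (Kc 0).
Definition CE (M : nat) : ey := If hhE (Pe (Pw (Pl (Fs pE) (Kc M)))) (Kc 0).

Definition init (n : nat) : nat := pair 0 (pair n (pair (S (pair n 0)) 0)).

Definition Af n k := dn AE [n; k].
Definition Bf n k := dn BE [n; k].
Definition Cf M n k := dn (CE M) [n; k].

Lemma pE_eq n k : dn pE [n; k] = runC k (init n).
Proof. reflexivity. Qed.

Lemma trip_eq M n k : let p := runC k (init n) in
  Af n k = match hN (unsnd p) with 0 => match unfst (unsnd (unsnd p)) with 0 => 1%nat | _ => 0%nat end | _ => 0%nat end /\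
  Bf n k = match hN (unsnd p) with 0 => match unfst (unsnd (unsnd p)) with 0 => 0%nat | _ => 1%nat end | _ => 0%nat end /\
  Cf M n k = match hN (unsnd p) with 0 => Nat.pred (2 ^ (unfst p + M)) | _ => 0%nat end.
Proof. repeat split; reflexivity. Qed.

Lemma AE_ok : oky AE 2. Proof. cbv -[lt]. repeat split; try lia; intros; lia. Qed.
Lemma BE_ok : oky BE 2. Proof. cbv -[lt]. repeat split; try lia; intros; lia. Qed.
Lemma CE_ok M : oky (CE M) 2. Proof. cbv -[lt]. repeat split; try lia; intros; lia. Qed.

Lemma init_not_halted n : hN (init n) <> 0%nat.
Proof. unfold hN, hE, init. cbn [dn nth]. rewrite unfst_pair. simpl. lia. Qed.

Definition Halts (n : nat) : Prop := exists k, hN (runN k (init n)) = 0%nat.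

Lemma trip_nohalt M n : ~ Halts n -> forall k, Af n k = 0%nat /\ Bf n k = 0%nat /\ Cf M n k = 0%nat.
Proof.
  intros NH k. assert (Hk : forall i, hN (runN i (init n)) <> 0%nat) by (intros i E; apply NH; exists i; exact E).
  destruct (trip_eq M n k) as [E1 [E2 E3]]. rewrite runC_pre in E1, E2, E3 by auto.
  rewrite unsnd_pair in E1, E2, E3. destruct (hN (runN k (init n))) eqn:E. exfalso; eapply Hk; eauto.
  auto.
Qed.

Lemma trip_halt M n h : hN (runN h (init n)) = 0%nat -> (forall i, (i < h)%nat -> hN (runN i (init n)) <> 0%nat) ->
  (1 <= h)%nat /\
  (forall k, (k < h)%nat -> Af n k = 0%nat /\ Bf n k = 0%nat /\ Cf M n k = 0%nat) /\
  (forall k, (h <= k)%nat -> Af n k = Af n h /\ Bf n k = Bf n h /\ Cf M n k = Cf M n h) /\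
  let y := unfst (unsnd (runN h (init n))) in
  Af n h = match y with 0 => 1%nat | _ => 0%nat end /\
  Bf n h = match y with 0 => 0%nat | _ => 1%nat end /\
  Cf M n h = Nat.pred (2 ^ (h + M)).
Proof.
  intros H1 H2. split; [|split; [|split]].
  - destruct h. exfalso; apply (init_not_halted n); exact H1. lia.
  - intros k Hk. destruct (trip_eq M n k) as [E1 [E2 E3]]. rewrite runC_pre in E1, E2, E3 by (intros; apply H2; lia).
    rewrite unsnd_pair in E1, E2, E3. destruct (hN (runN k (init n))) eqn:E. exfalso; eapply H2; eauto. auto.
  - intros k Hk. destruct (trip_eq M n k) as [E1 [E2 E3]]. destruct (trip_eq M n h) as [F1 [F2 F3]].
    rewrite (runC_post _ h H2 H1 k Hk) in E1, E2, E3. rewrite (runC_post _ h H2 H1 h (le_n h)) in F1, F2, F3.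
    rewrite E1, E2, E3, F1, F2, F3. auto.
  - destruct (trip_eq M n h) as [F1 [F2 F3]]. rewrite (runC_post _ h H2 H1 h (le_n h)) in F1, F2, F3.
    rewrite unsnd_pair, unfst_pair, H1 in *. simpl. auto.
Qed.

Definition Khalt (n : nat) : nat :=
  match excluded_middle_informative (Halts n) with
  | left H => proj1_sig (constructive_indefinite_description _ H)
  | right _ => 0%nat
  end.

Lemma Kn_spec n : Halts n -> hN (runN (Khalt n) (init n)) = 0%nat.
Proof. intro H. unfold Khalt. destruct (excluded_middle_informative (Halts n)). 
  destruct (constructive_indefinite_description _ h). auto. contradiction. Qed.

Definition eps (M : nat) (n : nat) : R := qval (Af n (Khalt n)) (Bf n (Khalt n)) (Cf M n (Khalt n)).
Definition nu (M : nat) (n : nat) : R := qval 0 (Bf n (Khalt n)) (Cf M n (Khalt n)).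

Lemma qval_000 : qval 0 0 0 = 0.
Proof. unfold qval; simpl; lra. Qed.

Lemma qval_pow a b e : qval a b (Nat.pred (2 ^ e)) = (INR a - INR b) * ip e.
Proof. unfold qval, ip. replace (S (Nat.pred (2 ^ e))) with (2 ^ e)%nat.
  rewrite pow_INR. replace (INR 2) with 2 by (simpl; ring). unfold Rdiv. ring.
  pose proof (Nat.pow_nonzero 2 e). lia. Qed.

Lemma eps_class M n :
  (~ Halts n /\ eps M n = 0 /\ nu M n = 0 /\ forall k, qval (Af n k) (Bf n k) (Cf M n k) = 0 /\ qval 0 (Bf n k) (Cf M n k) = 0) \/
  (exists h, (1 <= h)%nat /\ hN (runN h (init n)) = 0%nat /\
     (forall i, (i < h)%nat -> hN (runN i (init n)) <> 0%nat) /\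
     (forall k, (k < h)%nat -> qval (Af n k) (Bf n k) (Cf M n k) = 0 /\ qval 0 (Bf n k) (Cf M n k) = 0) /\
     (forall k, (h <= k)%nat -> qval (Af n k) (Bf n k) (Cf M n k) = eps M n /\ qval 0 (Bf n k) (Cf M n k) = nu M n) /\
     let y := unfst (unsnd (runN h (init n))) in
     eps M n = (match y with 0 => 1 | _ => -1 end) * ip (h + M) /\
     nu M n = (match y with 0 => 0 | _ => -1 end) * ip (h + M)).
Proof.
  destruct (classic (Halts n)) as [H|H].
  - right. destruct (least_halt _ H) as [h [H1 H2]]. destruct (trip_halt M n h H1 H2) as [T1 [T2 [T3 T4]]].
    assert (hK : (h <= Khalt n)%nat).
    { destruct (Nat.lt_ge_cases (Khalt n) h); auto. exfalso. apply (H2 _ H0). apply Kn_spec; auto. }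
    destruct (T3 _ hK) as [K1 [K2 K3]].
    exists h. split; auto. split; auto. split; auto. split.
    { intros k Hk. destruct (T2 k Hk) as [-> [-> ->]]. rewrite qval_000. auto. }
    split.
    { intros k Hk. destruct (T3 k Hk) as [-> [-> ->]]. unfold eps, nu. rewrite K1, K2, K3. auto. }
    simpl in T4. destruct T4 as [A1 [A2 A3]]. unfold eps, nu. rewrite K1, K2, K3, A1, A2, A3, !qval_pow.
    destruct (unfst (unsnd (runN h (init n)))); simpl; split; ring.
  - left. pose proof (trip_nohalt M n H) as Z. split; auto.
    unfold eps, nu. destruct (Z (Khalt n)) as [-> [-> ->]]. rewrite qval_000. split; auto. split; auto.
    intro k. destruct (Z k) as [-> [-> ->]]. rewrite qval_000. auto.
Qed.

Lemma ip_bound_h M h k : (1 <= h)%nat -> (k < h)%nat -> Rabs (ip (h + M)) <= ip k.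
Proof. intros. rewrite Rabs_pos_eq by (left; apply ip_pos). apply ip_mono. lia. Qed.

Lemma sgn1 (y : nat) : Rabs (match y with 0%nat => 1 | _ => -1 end) = 1.
Proof. destruct y; unfold Rabs; destruct (Rcase_abs _); lra. Qed.
Lemma sgn0 (y : nat) : Rabs (match y with 0%nat => 0 | _ => -1 end) <= 1.
Proof. destruct y; unfold Rabs; destruct (Rcase_abs _); lra. Qed.

Lemma FC_eps M : FC (eps M).
Proof.
  exists Af, Bf, (Cf M). repeat split; try (apply rec2_ey; auto using AE_ok, BE_ok, CE_ok).
  intros n k. destruct (eps_class M n) as [[_ [E1 [_ Z]]]|[h [H1 [_ [_ [Lo [Hi [E1 _]]]]]]]].
  - rewrite (proj1 (Z k)), E1. rewrite Rminus_0_r, Rabs_R0. left; apply ip_pos.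
  - destruct (Nat.lt_ge_cases k h).
    + rewrite (proj1 (Lo k H)), E1. rewrite Rminus_0_l, Rabs_Ropp, Rabs_mult.
      rewrite sgn1, Rmult_1_l; apply ip_bound_h; auto.
    + rewrite (proj1 (Hi k H)). rewrite Rminus_diag, Rabs_R0. left; apply ip_pos.
Qed.

Lemma FC_nu M : FC (nu M).
Proof.
  exists (fun n k => dn (Kc 0) [n; k]), Bf, (Cf M). repeat split; try (apply rec2_ey; auto using AE_ok, BE_ok, CE_ok).
  simpl; auto.
  intros n k. simpl dn. destruct (eps_class M n) as [[_ [_ [E1 Z]]]|[h [H1 [_ [_ [Lo [Hi [_ E1]]]]]]]].
  - rewrite (proj2 (Z k)), E1. rewrite Rminus_0_r, Rabs_R0. left; apply ip_pos.
  - destruct (Nat.lt_ge_cases k h).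
    + rewrite (proj2 (Lo k H)), E1. rewrite Rminus_0_l, Rabs_Ropp, Rabs_mult.
      pose proof (sgn0 (unfst (unsnd (runN h (init n))))). pose proof (ip_bound_h M h k H1 H).
      pose proof (Rabs_pos (ip (h + M))).
      pose proof (Rabs_pos (match unfst (unsnd (runN h (init n))) with 0%nat => 0 | _ => -1 end)). nra.
    + rewrite (proj2 (Hi k H)). rewrite Rminus_diag, Rabs_R0. left; apply ip_pos.
Qed.

Lemma eps_bound M n : Rabs (eps M n) <= ip (S M).
Proof.
  destruct (eps_class M n) as [[_ [E1 _]]|[h [H1 [_ [_ [_ [_ [E1 _]]]]]]]].
  - rewrite E1, Rabs_R0. left; apply ip_pos.
  - rewrite E1, Rabs_mult, sgn1, Rmult_1_l.
    rewrite Rabs_pos_eq by (left; apply ip_pos); apply ip_mono; lia.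
Qed.

Lemma nu_min M n : nu M n = Rmin (eps M n) 0.
Proof.
  destruct (eps_class M n) as [[_ [E1 [E2 _]]]|[h [H1 [_ [_ [_ [_ [E1 E2]]]]]]]].
  - rewrite E1, E2. unfold Rmin. destruct (Rle_dec 0 0); lra.
  - rewrite E1, E2. pose proof (ip_pos (h + M)). unfold Rmin.
    destruct (unfst _); destruct (Rle_dec _ 0); lra.
Qed.

Lemma eps_eval M c y : eval c [enc c] y ->
  (y = 0%nat -> 0 < eps M (enc c)) /\ ((0 < y)%nat -> eps M (enc c) < 0).
Proof.
  intro H. pose proof (complete _ _ _ H []) as [j Hj].
  assert (Ij : init (enc c) = encS (Ev c [enc c] [])) by reflexivity.
  assert (Rj : runN j (init (enc c)) = pair 1 (pair y 0)).
  { rewrite Ij, runN_enc, Hj. reflexivity. }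
  assert (Hj0 : hN (runN j (init (enc c))) = 0%nat).
  { rewrite Rj. apply (hN_halt y). }
  destruct (eps_class M (enc c)) as [[NH _]|[h [H1 [Hh [Hmin [_ [_ [E1 _]]]]]]]].
  - exfalso. apply NH. exists j. exact Hj0.
  - assert (hj : (h <= j)%nat).
    { destruct (Nat.lt_ge_cases j h); auto. exfalso. exact (Hmin j H0 Hj0). }
    pose proof (halted_stay (init (enc c)) h j hj Hh) as St.
    rewrite Rj in St. rewrite <- St in E1. rewrite unsnd_pair, unfst_pair in E1.
    pose proof (ip_pos (h + M)). split; intro Y0.
    + subst y. rewrite E1. lra.
    + destruct y. lia. rewrite E1. lra.
Qed.

Open Scope R_scope.

Lemma exists_ip_lt r : 0 < r -> exists M, ip M < r.
Proof. intro H. destruct (pow_lt_1_zero (/2) ltac:(rewrite Rabs_pos_eq; lra) r H) as [N HN].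
  exists N. specialize (HN N (le_n N)). rewrite Rabs_pos_eq in HN by (apply pow_le; lra).
  unfold ip. rewrite <- pow_inv. auto. Qed.

Lemma qval_gt_half a b c : 1/2 < qval a b c -> (2 * b + S c < 2 * a)%nat.
Proof. unfold qval. intro H. pose proof (INR_S_pos c).
  assert (INR a - INR b = qval a b c * INR (S c)) by (unfold qval; field; lra).
  unfold qval in H1. apply INR_lt. rewrite !plus_INR, !mult_INR. simpl (INR 2).
  assert (1/2 * INR (S c) < (INR a - INR b) / INR (S c) * INR (S c)) by (apply Rmult_lt_compat_r; lra).
  lra. Qed.

Lemma qval_lt_half a b c : qval a b c < 1/2 -> (2 * a <= 2 * b + S c)%nat.
Proof. unfold qval. intro H. pose proof (INR_S_pos c).
  assert (INR a - INR b = qval a b c * INR (S c)) by (unfold qval; field; lra).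
  unfold qval in H1. apply INR_le. rewrite !plus_INR, !mult_INR. simpl (INR 2).
  assert ((INR a - INR b) / INR (S c) * INR (S c) < 1/2 * INR (S c)) by (apply Rmult_lt_compat_r; lra).
  lra. Qed.

Lemma eps_eval' M c n y : n = enc c -> eval c [n] y ->
  (y = 0%nat -> 0 < eps M n) /\ ((0 < y)%nat -> eps M n < 0).
Proof. intros -> H. apply eps_eval; auto. Qed.

Lemma final_contra (e0 : nat) (q ev : R) (a b c : nat -> nat -> nat) :
  (match (2 * a e0 2 - (2 * b e0 2 + S (c e0 2)))%nat with 0%nat => 0%nat | _ => 1%nat end = 0%nat -> 0 < ev) ->
  ((0 < match (2 * a e0 2 - (2 * b e0 2 + S (c e0 2)))%nat with 0%nat => 0%nat | _ => 1%nat end)%nat -> ev < 0) ->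
  (0 < ev -> q = 1) -> (ev < 0 -> q = 0) ->
  Rabs (qval (a e0 2%nat) (b e0 2%nat) (c e0 2%nat) - q) <= ip 2 -> False.
Proof.
  intros S1 S2 O1 O2 Hq. replace (ip 2) with (1/4) in Hq by (unfold ip; simpl; lra).
  assert (Hq1 : forall u v : R, Rabs (u - v) <= 1/4 -> u - v <= 1/4 /\ v - u <= 1/4).
  { intros u v Huv. split. eapply Rle_trans; [apply Rle_abs|exact Huv].
    rewrite <- Rabs_Ropp in Huv. eapply Rle_trans; [|exact Huv]. replace (v - u) with (- (u - v)) by ring. apply Rle_abs. }
  apply Hq1 in Hq.
  destruct (2 * a e0 2 - (2 * b e0 2 + S (c e0 2)))%nat eqn:E.
  - rewrite (O1 (S1 eq_refl)) in Hq.
    assert (1/2 < qval (a e0 2%nat) (b e0 2%nat) (c e0 2%nat)) by lra.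
    apply qval_gt_half in H. lia.
  - rewrite (O2 (S2 (Nat.lt_0_succ _))) in Hq.
    assert (qval (a e0 2%nat) (b e0 2%nat) (c e0 2%nat) < 1/2) by lra.
    apply qval_lt_half in H. lia.
Qed.

Lemma dnRE (a b c : nat -> nat -> nat) ca cb cc n :
  dn (If (Mi (Tm (Kc 2) (Xt ca a (Y 0) (Kc 2)))
                    (Pl (Tm (Kc 2) (Xt cb b (Y 0) (Kc 2))) (Su (Xt cc c (Y 0) (Kc 2))))) (Kc 0) (Kc 1)) [n]
  = match (2 * a n 2 - (2 * b n 2 + S (c n 2)))%nat with 0%nat => 0%nat | _ => 1%nat end.
Proof. reflexivity. Qed.

Lemma diag_contra d01 d10 M (P : nat -> bool -> R) (F : (bool -> R) -> R -> (bool -> bool -> R))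
  (a b c : nat -> nat -> nat) ca cb cc
  (Ca : forall x y, eval ca [x; y] (a x y)) (Cb : forall x y, eval cb [x; y] (b x y))
  (Cc : forall x y, eval cc [x; y] (c x y)) (H01 : 0 < d01) (H10 : 0 < d10)
  (Hdist : forall n, is_dist (P n))
  (He : forall n, P n false > 0 /\ P n true > 0)
  (Hdiff : forall n, P n true * d10 - P n false * d01 = eps M n)
  (HF : forall n, optimal_channel (dmat d01 d10) (Dmax (dmat d01 d10) (P n))
                     (P n) (F (P n) (Dmax (dmat d01 d10) (P n))))
  (Hq : forall n k, Rabs (qval (a n k) (b n k) (c n k) - F (P n) (Dmax (dmat d01 d10) (P n)) false true) <= ip k) : False.
Proof.
  set (RE := If (Mi (Tm (Kc 2) (Xt ca a (Y 0) (Kc 2)))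
                    (Pl (Tm (Kc 2) (Xt cb b (Y 0) (Kc 2))) (Su (Xt cc c (Y 0) (Kc 2))))) (Kc 0) (Kc 1)).
  assert (Rok : oky RE 1) by (simpl; repeat split; auto; lia).
  remember (cy RE) as rho eqn:Hrho. remember (enc rho) as e0 eqn:He0.
  pose proof (cy_ok RE [e0] Rok) as Ev0. rewrite <- Hrho in Ev0.
  destruct (eps_eval' M rho e0 _ He0 Ev0) as [Sg1 Sg2].
  destruct (opt_sign d01 d10 (P e0) _ H01 H10 (Hdist e0)
    (proj1 (He e0)) (proj2 (He e0))
    (HF e0)) as [O1 O2].
  specialize (Hq e0 2%nat). clear He0 Hrho.
  unfold RE in Sg1, Sg2. rewrite dnRE in Sg1, Sg2.
  pose proof (Hdiff e0) as Dd.
  exact (final_contra e0 (F (P e0) (Dmax (dmat d01 d10) (P e0)) false true) (eps M e0) a b c Sg1 Sg2 (fun h => O1 ltac:(lra)) (fun h => O2 ltac:(lra)) Hq).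
Qed.

Theorem mainTheorem6 :
  forall d01 d10 : R,
    computable_real d01 -> computable_real d10 -> 0 < d01 -> 0 < d10 ->
    exists P : nat -> bool -> R,
      (forall n, is_dist (P n)) /\
      (forall x, computable_seq (fun n => P n x)) /\
      computable_seq (fun n => Dmax (dmat d01 d10) (P n)) /\
      forall F : (bool -> R) -> R -> (bool -> bool -> R),
        (forall n, optimal_channel (dmat d01 d10) (Dmax (dmat d01 d10) (P n))
                     (P n) (F (P n) (Dmax (dmat d01 d10) (P n)))) ->
        ~ BM_computable F.
Proof.
  intros d01 d10 C01 C10 H01 H10.
  destruct (exists_ip_lt (Rmin d01 d10)) as [M HM]. unfold Rmin; destruct (Rle_dec d01 d10); lra.
  assert (HM1 : ip M < d01) by (eapply Rlt_le_trans; [exact HM| apply Rmin_l]).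
  assert (HM2 : ip M < d10) by (eapply Rlt_le_trans; [exact HM| apply Rmin_r]).
  destruct (exists_ip_lt (/ (d01 + d10 + 1))) as [B0 HB0]. apply Rinv_0_lt_compat; lra.
  assert (HB0' : d01 + d10 + 1 < 2 ^ B0).
  { pose proof (ip_2pow B0). pose proof (ip_pos B0).
    apply (Rmult_lt_compat_r (2 ^ B0 * (d01 + d10 + 1))) in HB0. 2: { apply Rmult_lt_0_compat. apply pow_lt; lra. lra. }
    replace (ip B0 * (2 ^ B0 * (d01 + d10 + 1))) with (d01 + d10 + 1) in HB0 by (rewrite <- Rmult_assoc, H; ring).
    replace (/ (d01 + d10 + 1) * (2 ^ B0 * (d01 + d10 + 1))) with (2 ^ B0) in HB0 by (field; lra). exact HB0. }
  set (B := (B0 + M)%nat).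
  assert (HB1 : 2 ^ B0 <= 2 ^ B) by (apply Rle_pow; [lra| unfold B; lia]).
  assert (HB2 : 2 ^ M <= 2 ^ B) by (apply Rle_pow; [lra| unfold B; lia]).
  set (S0 := d01 + d10). set (iS := / S0). set (e := eps M).
  assert (HS0 : ip M <= S0) by (unfold S0; lra).
  assert (HiS : 0 < iS) by (unfold iS, S0; apply Rinv_0_lt_compat; lra).
  assert (HiSB : iS <= 2 ^ M).
  { unfold iS. pose proof (ip_2pow M). pose proof (ip_pos M). replace (2 ^ M) with (/ ip M).
    apply Rinv_le_contravar; auto. field_simplify_eq; [lra| lra]. }
  assert (He : forall n, Rabs (e n) < ip M).
  { intro n. eapply Rle_lt_trans. apply eps_bound. rewrite ip_S. pose proof (ip_pos M). lra. }
  set (P := fun n (x : bool) => if x then (d01 + e n) * iS else (d10 - e n) * iS).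
  assert (Hdist : forall n, is_dist (P n)).
  { intro n. pose proof (He n). apply Rabs_def2 in H. split.
    - intros [|]; simpl; apply Rmult_le_pos; lra.
    - unfold sum2, P. unfold iS. field_simplify_eq. unfold S0; ring. unfold S0; lra. }
  assert (FCiS : FC (fun _ => iS)).
  { apply (FC_inv (fun _ => S0) M). apply FC_add; apply FC_const; auto. intros; auto. }
  assert (BiS : forall n : nat, Rabs iS <= 2 ^ B) by (intro; rewrite Rabs_pos_eq; lra).
  assert (FCt : FC (fun n => P n true)).
  { apply (FC_mul (fun n => d01 + e n) (fun _ => iS) B); auto.
    apply FC_add. apply FC_const; auto. apply FC_eps.
    intro n. pose proof (He n). apply Rabs_def2 in H. pose proof (ip_le1 M).
    rewrite Rabs_pos_eq by lra. lra. }
  assert (FCf : FC (fun n => P n false)).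
  { apply (FC_mul (fun n => d10 + - e n) (fun _ => iS) B); auto.
    apply FC_add. apply FC_const; auto. apply FC_neg, FC_eps.
    intro n. pose proof (He n). apply Rabs_def2 in H. pose proof (ip_le1 M).
    rewrite Rabs_pos_eq by lra. lra. }
  assert (Hdiff : forall n, P n true * d10 - P n false * d01 = e n).
  { intro n. unfold P, iS, S0. field. lra. }
  assert (HD : forall n, Dmax (dmat d01 d10) (P n) = P n false * d01 + nu M n).
  { intro n. unfold Dmax. rewrite sum_dmat_false, sum_dmat_true, nu_min. fold e.
    pose proof (Hdiff n). unfold Rmin. destruct (Rle_dec _ _); destruct (Rle_dec _ _); lra. }
  assert (FCD : FC (fun n => Dmax (dmat d01 d10) (P n))).
  { apply (FC_ext (fun n => P n false * d01 + nu M n)); [| intro; rewrite HD; auto].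
    apply FC_add. apply (FC_mul _ _ B); auto. apply FC_const; auto.
    intro n. destruct (Hdist n) as [Hp Hs]. unfold sum2 in Hs. pose proof (Hp false). pose proof (Hp true).
    rewrite Rabs_pos_eq by lra. lra.
    intro n. rewrite Rabs_pos_eq by lra. lra. apply FC_nu. }
  exists P. split; auto. split.
  { intros [|]; apply cs_of_FC; auto. }
  split. { apply cs_of_FC; auto. }
  intros F HF HBM.
  assert (HDnn : forall n, 0 <= Dmax (dmat d01 d10) (P n)).
  { intro n. unfold Dmax. rewrite sum_dmat_false, sum_dmat_true. destruct (Hdist n) as [Hp _].
    pose proof (Hp false). pose proof (Hp true). apply Rmin_glb; apply Rmult_le_pos; lra. }
  pose proof (HBM P (fun n => Dmax (dmat d01 d10) (P n)) Hdist HDnn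
    (fun x => match x with true => cs_of_FC _ FCt | false => cs_of_FC _ FCf end)
    (cs_of_FC _ FCD) false true) as Hq.
  apply FC_of_cs in Hq. destruct Hq as [a [b [c [Ha [Hb [Hc Hq]]]]]].
  destruct (rec2_code _ Ha) as [ca Ca]. destruct (rec2_code _ Hb) as [cb Cb].
  destruct (rec2_code _ Hc) as [cc Cc].
  assert (Hpos : forall n, P n false > 0 /\ P n true > 0).
  { intro n. pose proof (He n) as H. apply Rabs_def2 in H. unfold P. split; apply Rmult_lt_0_compat; lra. }
  exact (diag_contra d01 d10 M P F a b c ca cb cc Ca Cb Cc H01 H10 Hdist Hpos Hdiff HF Hq).
Qed.
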